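(* Every pair of elements of $\mathrm{PSp}(1)$ is strongly doubly reversible.
   Context: $\mathrm{Sp}(1)$ is the group of unit quaternions and $\mathrm{PSp}(1)=\mathrm{Sp}(1)/\{\pm 1\}$. A pair $(g_1,g_2)$ in a group $G$ is strongly doubly reversible if there is $g\in G$ with $g^2=1$ such that $g g_1 g^{-1}=g_1^{-1}$ and $g g_2 g^{-1}=g_2^{-1}$. *)

(* Defs.v *)
From HB Require Import structures.
From mathcomp Require Import all_boot all_order all_algebra.
From mathcomp Require Import reals.
Set Implicit Arguments. Unset Strict Implicit. Unset Printing Implicit Defensive.
Import Order.TTheory GRing.Theory Num.Theory.
Local Open Scope ring_scope.

(* Real quaternions a + b i + c j + d k *)
Record quat (R : realType) := Quat { qa : R; qb : R; qc : R; qd : R }.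

Section Quat.
Variable R : realType.
Implicit Types p q : quat R.

Definition qone : quat R := Quat 1 0 0 0.
Definition qopp q : quat R := Quat (- qa q) (- qb q) (- qc q) (- qd q).
(* Hamilton product, i^2 = j^2 = k^2 = ijk = -1 *)
Definition qmul p q : quat R :=
  Quat (qa p * qa q - qb p * qb q - qc p * qc q - qd p * qd q)
       (qa p * qb q + qb p * qa q + qc p * qd q - qd p * qc q)
       (qa p * qc q - qb p * qd q + qc p * qa q + qd p * qb q)
       (qa p * qd q + qb p * qc q - qc p * qb q + qd p * qa q).
Definition qnorm2 q : R := qa q ^+ 2 + qb q ^+ 2 + qc q ^+ 2 + qd q ^+ 2.
Definition qconj q : quat R := Quat (qa q) (- qb q) (- qc q) (- qd q).
Definition qinv q : quat R :=
  let n := (qnorm2 q)^-1 in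
  Quat (qa (qconj q) * n) (qb (qconj q) * n) (qc (qconj q) * n) (qd (qconj q) * n).

Definition in_Sp1 q : Prop := qnorm2 q = 1.

(* Equality in PSp(1) = Sp(1)/{1,-1} of the classes of two unit quaternions *)
Definition PSp1_eq p q : Prop := p = q \/ p = qopp q.

Definition PSp1_strongly_doubly_reversible g1 g2 : Prop :=
  exists g : quat R, in_Sp1 g /\
    PSp1_eq (qmul g g) qone /\
    PSp1_eq (qmul (qmul g g1) (qinv g)) (qinv g1) /\
    PSp1_eq (qmul (qmul g g2) (qinv g)) (qinv g2).
End Quat.

(* Main.v *)
Require Import Defs.
From mathcomp Require Import all_boot all_order all_algebra.
From mathcomp Require Import reals.
From mathcomp Require Import ring lra.
Import Order.TTheory GRing.Theory Num.Theory.
Local Open Scope ring_scope.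

Lemma normalize_vec (R : realType) (p1 p2 p3 : R) :
  p1 ^+ 2 + p2 ^+ 2 + p3 ^+ 2 != 0 ->
  exists w1 w2 w3 : R, w1 ^+ 2 + w2 ^+ 2 + w3 ^+ 2 = 1 /\
    forall u1 u2 u3 : R, p1 * u1 + p2 * u2 + p3 * u3 = 0 ->
      w1 * u1 + w2 * u2 + w3 * u3 = 0.
Proof.
move=> hn.
set s2 := p1 ^+ 2 + p2 ^+ 2 + p3 ^+ 2 in hn *.
have s2ge : 0 <= s2 by rewrite /s2; nra.
set s := Num.sqrt s2.
have ss : s ^+ 2 = s2 by rewrite sqr_sqrtr.
have s0 : s != 0.
  apply/eqP=> h; move: hn; rewrite -ss h; rewrite expr0n /= eqxx //.
exists (p1 / s), (p2 / s), (p3 / s); split.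
  have -> : (p1 / s) ^+ 2 + (p2 / s) ^+ 2 + (p3 / s) ^+ 2 = s2 / s ^+ 2.
    by rewrite /s2; field.
  by rewrite ss divff.
move=> u1 u2 u3 h.
have -> : p1 / s * u1 + p2 / s * u2 + p3 / s * u3 = (p1 * u1 + p2 * u2 + p3 * u3) / s.
  by field.
by rewrite h mul0r.
Qed.

Lemma sq0 (R : realType) (a b : R) : a ^+ 2 + b ^+ 2 = 0 -> a = 0 /\ b = 0.
Proof.
move=> h.
have ha : a ^+ 2 = 0 by apply/eqP; rewrite eq_le; apply/andP; split; nra.
have hb : b ^+ 2 = 0 by apply/eqP; rewrite eq_le; apply/andP; split; nra.
by split; apply/eqP; rewrite -sqrf_eq0 ?ha ?hb.
Qed.

Lemma sq0_3 (R : realType) (a b c : R) : a ^+ 2 + b ^+ 2 + c ^+ 2 = 0 ->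
  [/\ a = 0, b = 0 & c = 0].
Proof.
move=> h.
have [hab hc] : a = 0 /\ Num.sqrt (b ^+ 2 + c ^+ 2) = 0.
  apply: sq0; rewrite sqr_sqrtr; last nra. by rewrite addrA.
have hbc : b ^+ 2 + c ^+ 2 = 0.
  have : Num.sqrt (b ^+ 2 + c ^+ 2) ^+ 2 = 0 by rewrite hc expr0n.
  by rewrite sqr_sqrtr //; nra.
by have [hb hc'] := sq0 _ _ _ hbc.
Qed.

Lemma perp_vec (R : realType) (x1 x2 x3 y1 y2 y3 : R) :
  exists p1 p2 p3 : R, p1 ^+ 2 + p2 ^+ 2 + p3 ^+ 2 != 0 /\
    p1 * x1 + p2 * x2 + p3 * x3 = 0 /\ p1 * y1 + p2 * y2 + p3 * y3 = 0.
Proof.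
(* perpendicular to z, where z x y = 0 (z parallel to y) *)
have key : forall z1 z2 z3 y1 y2 y3 : R,
  z2 * y3 - z3 * y2 = 0 -> z3 * y1 - z1 * y3 = 0 -> z1 * y2 - z2 * y1 = 0 ->
  z1 ^+ 2 + z2 ^+ 2 + z3 ^+ 2 != 0 ->
  exists p1 p2 p3 : R, p1 ^+ 2 + p2 ^+ 2 + p3 ^+ 2 != 0 /\
    p1 * z1 + p2 * z2 + p3 * z3 = 0 /\ p1 * y1 + p2 * y2 + p3 * y3 = 0.
  move=> z1 z2 z3 v1 v2 v3 e1 e2 e3 nz.
  have [h|h] := eqVneq (z1 ^+ 2 + z2 ^+ 2) 0.
    have [h1 h2] := sq0 _ _ _ h.
    have z3n : z3 != 0.
      apply: contraNneq nz => ->; rewrite h1 h2; apply/eqP; ring.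
    exists 1, 0, 0; split; first by apply/eqP => H; move: H; apply/eqP; lra.
    split; first by rewrite h1; ring.
    move: e2; rewrite h1 => e2.
    have : z3 * v1 = 0 by rewrite -e2; ring.
    move/eqP; rewrite mulf_eq0 (negPf z3n) /= => /eqP ->; ring.
  exists (- z2), z1, 0; split.
    apply: contraNneq h => H; apply/eqP; rewrite -H; ring.
  split; first ring.
  transitivity (z1 * v2 - z2 * v1); [ring | exact e3].
have [h|h] := eqVneq ((x2 * y3 - x3 * y2) ^+ 2 + (x3 * y1 - x1 * y3) ^+ 2
                       + (x1 * y2 - x2 * y1) ^+ 2) 0.
  have [e1 e2 e3] := sq0_3 _ _ _ _ h.
  have [hx|hx] := eqVneq (x1 ^+ 2 + x2 ^+ 2 + x3 ^+ 2) 0.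
    have [-> -> ->] := sq0_3 _ _ _ _ hx.
    have [hy|hy] := eqVneq (y1 ^+ 2 + y2 ^+ 2 + y3 ^+ 2) 0.
      have [-> -> ->] := sq0_3 _ _ _ _ hy.
      exists 1, 0, 0; split; last by split; ring.
      by apply/eqP => H; move: H; apply/eqP; lra.
    have [p1 [p2 [p3 [pn [_ py]]]]] := key y1 y2 y3 y1 y2 y3
       ltac:(ring) ltac:(ring) ltac:(ring) hy.
    by exists p1, p2, p3; split => //; split => //; ring.
  exact: key.
exists (x2 * y3 - x3 * y2), (x3 * y1 - x1 * y3), (x1 * y2 - x2 * y1).
split => //; split; ring.
Qed.

Lemma conj_perp (R : realType) (w1 w2 w3 : R) (q : quat R) :
  w1 ^+ 2 + w2 ^+ 2 + w3 ^+ 2 = 1 -> qnorm2 q = 1 ->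
  w1 * qb q + w2 * qc q + w3 * qd q = 0 ->
  qmul (qmul (Quat 0 w1 w2 w3) q) (qinv (Quat 0 w1 w2 w3)) = qinv q.
Proof.
case: q => a b c d /= hN hq hD.
have hg : qnorm2 (Quat 0 w1 w2 w3) = 1 by rewrite /qnorm2 /= -hN; ring.
rewrite /qinv hg hq invr1 /qmul /qconj /=.
congr Quat.
- transitivity (a * (w1 ^+ 2 + w2 ^+ 2 + w3 ^+ 2)); first ring.
  by rewrite hN; ring.
- transitivity (2 * (w1 * b + w2 * c + w3 * d) * w1 - (w1 ^+ 2 + w2 ^+ 2 + w3 ^+ 2) * b); first ring.
  by rewrite hN hD; ring.
- transitivity (2 * (w1 * b + w2 * c + w3 * d) * w2 - (w1 ^+ 2 + w2 ^+ 2 + w3 ^+ 2) * c); first ring.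
  by rewrite hN hD; ring.
- transitivity (2 * (w1 * b + w2 * c + w3 * d) * w3 - (w1 ^+ 2 + w2 ^+ 2 + w3 ^+ 2) * d); first ring.
  by rewrite hN hD; ring.
Qed.

Theorem theorem3p3 (R : realType) (g1 g2 : quat R) :
  in_Sp1 g1 -> in_Sp1 g2 -> PSp1_strongly_doubly_reversible g1 g2.
Proof.
move=> h1 h2.
have [p1 [p2 [p3 [pn [px py]]]]] := perp_vec _ (qb g1) (qc g1) (qd g1) (qb g2) (qc g2) (qd g2).
have [w1 [w2 [w3 [hN hw]]]] := normalize_vec _ _ _ _ pn.
exists (Quat 0 w1 w2 w3); split.
  by rewrite /in_Sp1 /qnorm2 /= -hN; ring.
split.
  right; rewrite /qmul /qopp /qone /=; congr Quat; try ring.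
  by rewrite -hN; ring.
split; left; apply: conj_perp => //; exact: hw.
Qed.
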